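(* Suppose $S,T\subseteq[r]$ and $S$ dominates $T$. Let $u,v$ be $\mathbf{ab}$-monomials, possibly empty. Then (1) $m(S)\cdot\mathbf a\cdot v$ dominates $m(T)\cdot\mathbf a\cdot v$; (2) $u\cdot\mathbf a\cdot m(S)$ dominates $u\cdot\mathbf a\cdot m(T)$; (3) $u\cdot\mathbf a\cdot m(S)\cdot\mathbf a\cdot v$ dominates $u\cdot\mathbf a\cdot m(T)\cdot\mathbf a\cdot v$.
   Context: For a permutation $\pi=a_1\cdots a_{N+1}\in S_{N+1}$, its descent set is $\{i\in[N]:a_i>a_{i+1}\}$, and $D(S)$ is the set of permutations in $S_{N+1}$ with descent set $S\subseteq[N]$. The inversion set is $I(\pi)=\{(a_i,a_j):i<j,\ a_i>a_j\}$; weak Bruhat order: $\pi\le_w\pi'$ iff $I(\pi)\subseteq I(\pi')$. For $S,T\subseteq[N]$, $S$ dominates $T$ if there is an injection $\phi:D(T)\to D(S)$ with $\pi\le_w\phi(\pi)$ for all $\pi\in D(T)$. For $S\subseteq[N]$, $m(S)=u_1\cdots u_N$ is the word in noncommuting letters $\mathbf a,\mathbf b$ with $u_i=\mathbf b$ if $i\in S$ and $u_i=\mathbf a$ otherwise; conversely a word of length $N$ determines a subset of $[N]$, and dominance between two words of the same length $N$ means dominance between the corresponding subsets of $[N]$ (permutations in $S_{N+1}$). *)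

(* Defs.v *)
From mathcomp Require Import all_boot all_fingroup.
Set Implicit Arguments. Unset Strict Implicit. Unset Printing Implicit Defensive.

(* ab-words are encoded as seq bool: false = letter a, true = letter b. *)
Definition letter_a : bool := false.
Definition letter_b : bool := true.

(* A permutation pi = a_1 ... a_{N+1} of S_{N+1} is p : {perm 'I_N.+1},
   with a_{k+1} = p k (0-indexed positions and values). *)

(* Descent word of p: its k-th letter (0-based, k < N) is b iff a_{k+1} > a_{k+2},
   i.e. the word m(Des p). *)
Definition desc_word (N : nat) (p : {perm 'I_N.+1}) : seq bool :=
  [seq (p (inord k.+1) < p (inord k))%N | k <- iota 0 N].

Definition Dset (N : nat) (w : seq bool) : {set {perm 'I_N.+1}} :=
  [set p | desc_word p == w].

Definition inv_set (N : nat) (p : {perm 'I_N.+1}) : {set 'I_N.+1 * 'I_N.+1} :=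
  [set x : 'I_N.+1 * 'I_N.+1 | [exists i : 'I_N.+1, exists j : 'I_N.+1,
     [&& (i < j)%N, (p j < p i)%N & x == (p i, p j)]]].

Definition weak_le (N : nat) (p q : {perm 'I_N.+1}) : bool :=
  inv_set p \subset inv_set q.

Definition dom_at (N : nat) (w1 w2 : seq bool) : Prop :=
  exists phi : {perm 'I_N.+1} -> {perm 'I_N.+1},
    {in Dset N w2 &, injective phi} /\
    (forall p, p \in Dset N w2 -> phi p \in Dset N w1 /\ weak_le p (phi p)).

Definition dominates (w1 w2 : seq bool) : Prop :=
  size w1 = size w2 /\ dom_at (size w1) w1 w2.

(* m(S) for S subset of [r] (element k of 'I_r stands for k+1 in [r]). *)
Definition mword (r : nat) (S : {set 'I_r}) : seq bool :=
  [seq (i \in S) | i <- enum 'I_r].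

(* Main.v *)
Require Import Defs.
From mathcomp Require Import all_boot all_fingroup zify.


Lemma card_lt_ord n c : c <= n -> #|[set x : 'I_n | x < c]| = c.
Proof.
move=> hc.
have -> : [set x : 'I_n | x < c] = widen_ord hc @: [set: 'I_c].
  apply/setP => x; rewrite inE; apply/idP/imsetP.
  - move=> xc; exists (Ordinal xc); first by rewrite inE.
    by apply: val_inj.
  - by case=> y _ ->; rewrite /= ltn_ord.
rewrite card_imset ?cardsT ?card_ord //.
by move=> a b /(congr1 val) /= /val_inj.
Qed.

Lemma card_perm_lt n (s : {perm 'I_n}) i : #|[set j | s j < s i]| = s i.
Proof.
have -> : [set j | s j < s i] = (s^-1)%g @: [set x : 'I_n | x < s i].
  apply/setP => x; rewrite inE; apply/idP/imsetP.
  - by move=> h; exists (s x); rewrite ?inE ?permK.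
  - by case=> y; rewrite inE => h ->; rewrite permKV.
rewrite card_imset; last exact: perm_inj.
by apply: card_lt_ord; apply: ltnW.
Qed.

Lemma nth_desc N (p : {perm 'I_N.+1}) i : i < N ->
  nth false (desc_word p) i = (p (inord i.+1) < p (inord i)).
Proof. by move=> h; rewrite /desc_word (nth_map 0) ?size_iota // nth_iota. Qed.

Lemma size_desc N (p : {perm 'I_N.+1}) : size (desc_word p) = N.
Proof. by rewrite size_map size_iota. Qed.

Definition bl k r m (i : 'I_r.+1) : 'I_(k+r+m).+1 := inord (k + i).

Lemma blE k r m i : (bl k r m i : nat) = k + i.
Proof. rewrite /bl inordK //; have := ltn_ord i; lia. Qed.

Lemma bl_inj k r m : injective (bl k r m).
Proof. by move=> i j /(congr1 val) /=; rewrite !blE => /addnI /val_inj. Qed.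

Definition inblk k r (x : nat) := (k <= x) && (x <= k + r).

Definition unbl k r m (x : 'I_(k+r+m).+1) : 'I_r.+1 := inord (x - k).

Lemma unblK k r m (x : 'I_(k+r+m).+1) : inblk k r x -> bl k r m (unbl k r m x) = x.
Proof.
move=> /andP[h1 h2]; apply: val_inj; rewrite /= blE /unbl inordK; lia.
Qed.

Lemma blK k r m i : unbl k r m (bl k r m i) = i.
Proof. by apply: val_inj; rewrite /= /unbl blE addKn inordK ?ltn_ord. Qed.

Lemma inblk_bl k r m i : inblk k r (bl k r m i).
Proof. rewrite /inblk blE; have := ltn_ord i; lia. Qed.

Definition rk k r m (p : {perm 'I_(k+r+m).+1}) (i : 'I_r.+1) :=
  #|[set j : 'I_r.+1 | p (bl k r m j) < p (bl k r m i)]|.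

Lemma rk_mono k r m (p : {perm 'I_(k+r+m).+1}) i j : p (bl k r m i) < p (bl k r m j) -> rk k r m p i < rk k r m p j.
Proof.
move=> h; apply: proper_card; apply/properP; split.
- apply/subsetP => x; rewrite !inE => hx; exact: ltn_trans hx h.
- by exists i; rewrite !inE ?ltnn.
Qed.

Lemma rk_ltE k r m (p : {perm 'I_(k+r+m).+1}) i j : (rk k r m p i < rk k r m p j) = (p (bl k r m i) < p (bl k r m j)).
Proof.
apply/idP/idP; last exact: rk_mono.
move=> h; case: (ltngtP (p (bl k r m i)) (p (bl k r m j))) => // h2.
- by have := rk_mono _ _ _ _ _ _ h2; rewrite ltnNge (ltnW h).
- by move/val_inj/perm_inj/bl_inj: h2 => e; move: h; rewrite e ltnn.
Qed.

Lemma rk_bound k r m (p : {perm 'I_(k+r+m).+1}) i : rk k r m p i < r.+1.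
Proof.
rewrite -[X in _ < X](card_ord r.+1) -cardsT; apply: proper_card; apply/properP; split.
- exact: subsetT.
- by exists i; rewrite ?inE ?ltnn.
Qed.

Lemma rk_inj k r m (p : {perm 'I_(k+r+m).+1}) : injective (fun i => Ordinal (rk_bound k r m p i)).
Proof.
move=> i j [] e; apply/eqP; apply: contraT => ne.
case: (ltngtP (p (bl k r m i)) (p (bl k r m j))) => h.
- by move: h; rewrite -rk_ltE e ltnn.
- by move: h; rewrite -rk_ltE e ltnn.
- by move/val_inj/perm_inj/bl_inj: h => e2; rewrite e2 eqxx in ne.
Qed.

Definition sig k r m (p : {perm 'I_(k+r+m).+1}) : {perm 'I_r.+1} := perm (rk_inj k r m p).

Lemma sigE k r m (p : {perm 'I_(k+r+m).+1}) i : (sig k r m p i : nat) = rk k r m p i.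
Proof. by rewrite permE. Qed.

Lemma sig_ltE k r m (p : {perm 'I_(k+r+m).+1}) i j :
  (sig k r m p i < sig k r m p j) = (p (bl k r m i) < p (bl k r m j)).
Proof. by rewrite !sigE rk_ltE. Qed.

Lemma weak_first n (s t : {perm 'I_n.+1}) : weak_le s t -> s ord0 <= t ord0.
Proof.
move=> /subsetP W; rewrite leqNgt; apply/negP => h.
pose j := (s^-1)%g (t ord0).
have sj : s j = t ord0 by rewrite permKV.
have j0 : (j : nat) != 0.
  apply/eqP => e; have ej : j = ord0 by apply: val_inj.
  by move: h; rewrite -sj ej ltnn.
have : (s ord0, s j) \in inv_set s.
  rewrite inE; apply/existsP; exists ord0; apply/existsP; exists j.
  by rewrite eqxx andbT sj h andbT lt0n.
move/W; rewrite inE => /existsP[a /existsP[b /and3P[ab _ /eqP[ea eb]]]].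
move: eb; rewrite sj => /perm_inj eb.
by move: ab; rewrite -eb.
Qed.

Lemma weak_last n (s t : {perm 'I_n.+1}) : weak_le s t -> t ord_max <= s ord_max.
Proof.
move=> /subsetP W; rewrite leqNgt; apply/negP => h.
pose j := (s^-1)%g (t ord_max).
have sj : s j = t ord_max by rewrite permKV.
have j0 : (j : nat) < n.
  have := ltn_ord j; rewrite ltnS leq_eqVlt => /orP[/eqP e|//].
  have ej : j = ord_max by apply: val_inj.
  by move: h; rewrite -sj ej ltnn.
have : (s j, s ord_max) \in inv_set s.
  rewrite inE; apply/existsP; exists j; apply/existsP; exists ord_max.
  by rewrite eqxx andbT sj h andbT.
move/W; rewrite inE => /existsP[a /existsP[b /and3P[ab _ /eqP[ea eb]]]].
move: ea; rewrite sj => /perm_inj ea.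
by move: ab; rewrite -ea /= ltnNge -ltnS ltn_ord.
Qed.

Definition np k r m (p : {perm 'I_(k+r+m).+1}) (rho : {perm 'I_r.+1})
  (x : 'I_(k+r+m).+1) := if inblk k r x then p (bl k r m (rho (unbl k r m x))) else p x.

Lemma np_inj k r m p rho : injective (np k r m p rho).
Proof.
move=> x y; rewrite /np; case hx: (inblk k r x); case hy: (inblk k r y) => /perm_inj e.
- by rewrite -(unblK _ _ _ _ hx) -(unblK _ _ _ _ hy); move/bl_inj/perm_inj: e => ->.
- by move: hy; rewrite -e inblk_bl.
- by move: hx; rewrite e inblk_bl.
- exact e.
Qed.

Definition Phi k r m (phi : {perm 'I_r.+1} -> {perm 'I_r.+1}) (p : {perm 'I_(k+r+m).+1}) :=
  perm (np_inj k r m p (phi (sig k r m p) * (sig k r m p)^-1)%g).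

Lemma Phi_bl k r m phi p i :
  Phi k r m phi p (bl k r m i) = p (bl k r m ((sig k r m p)^-1%g (phi (sig k r m p) i))).
Proof. by rewrite permE /np inblk_bl blK permM. Qed.

Lemma Phi_out k r m phi p (x : 'I_(k+r+m).+1) : ~~ inblk k r x -> Phi k r m phi p x = p x.
Proof. by rewrite permE /np => /negbTE ->. Qed.

Lemma Phi_pre k r m phi p a :
  Phi k r m phi p (bl k r m ((phi (sig k r m p))^-1%g (sig k r m p a))) = p (bl k r m a).
Proof. by rewrite Phi_bl permKV permK. Qed.

Lemma sig_Phi k r m phi p : sig k r m (Phi k r m phi p) = phi (sig k r m p).
Proof.
apply/permP => i; apply: val_inj; rewrite /= sigE /rk.
have -> : [set j | Phi k r m phi p (bl k r m j) < Phi k r m phi p (bl k r m i)]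
        = [set j | phi (sig k r m p) j < phi (sig k r m p) i].
  by apply/setP => j; rewrite !inE !Phi_bl -sig_ltE !permKV.
exact: card_perm_lt.
Qed.

Lemma bl_inord k r m x : k <= x <= k + r ->
  (inord x : 'I_(k+r+m).+1) = bl k r m (inord (x - k)).
Proof. move=> /andP[h1 h2]; apply: val_inj; rewrite /= blE !inordK; lia. Qed.

Lemma inblk_inord k r m x : x <= k + r + m ->
  inblk k r (inord x : 'I_(k+r+m).+1) = inblk k r x.
Proof. by move=> h; rewrite inordK. Qed.

Lemma nth_desc_sig k r m (p : {perm 'I_(k+r+m).+1}) i : i < r ->
  nth false (desc_word (sig k r m p)) i = nth false (desc_word p) (k + i).
Proof.
move=> ir; rewrite !nth_desc; try lia.
rewrite sig_ltE (bl_inord k r m (k + i).+1) ?(bl_inord k r m (k+i)); try lia.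
have -> : (k + i).+1 - k = i.+1 by lia.
by have -> : k + i - k = i by lia.
Qed.

Lemma core k r m (wS wT W1 W2 : seq bool) :
  dom_at r wS wT -> size W1 = k+r+m -> size W2 = k+r+m -> size wS = r -> size wT = r ->
  (forall i, i < r -> nth false W1 (k+i) = nth false wS i) ->
  (forall i, i < r -> nth false W2 (k+i) = nth false wT i) ->
  (forall i, i < k+r+m -> (i < k) || (k + r <= i) -> nth false W1 i = nth false W2 i) ->
  (0 < k -> nth false W2 k.-1 = false) ->
  (k + r < k + r + m -> nth false W2 (k+r) = false) ->
  dom_at (k+r+m) W1 W2.
Proof.
move=> [phi [phi_inj phiD]] s1 s2 sS sT h1 h2 h12 hl hr.
have sigD : forall p, p \in Dset (k+r+m) W2 -> sig k r m p \in Dset r wT.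
  move=> p; rewrite !inE => /eqP dp; apply/eqP.
  apply: (@eq_from_nth _ false); first by rewrite size_desc sT.
  move=> i; rewrite size_desc => ir; rewrite nth_desc_sig // -h2 // dp //.
exists (Phi k r m phi); split.
- move=> p1 p2 d1 d2 e.
  have e1 : sig k r m (Phi k r m phi p1) = sig k r m (Phi k r m phi p2) by rewrite e.
  rewrite !sig_Phi in e1.
  have es := phi_inj _ _ (sigD _ d1) (sigD _ d2) e1.
  apply/permP => x.
  case hx: (inblk k r x).
  + rewrite -(unblK _ _ _ _ hx).
    move: (congr1 (fun q : {perm 'I_(k+r+m).+1} =>
       q (bl k r m ((phi (sig k r m p1))^-1%g (sig k r m p1 (unbl k r m x)))))e) => /=.
    by rewrite Phi_pre Phi_bl -es permKV permK.
  + move: (congr1 (fun q : {perm 'I_(k+r+m).+1} => q x) e) => /=.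
    by rewrite !Phi_out ?hx.
- move=> p dp; have [dS wle] := phiD _ (sigD _ dp).
  have dp' := dp; rewrite inE in dp'; move/eqP: dp' => dp'.
  rewrite inE in dS; move/eqP: dS => dS.
  set s := sig k r m p in dS wle.
  have wf := weak_first _ _ _ wle; have wl := weak_last _ _ _ wle.
  split.
  + rewrite inE; apply/eqP; apply: (@eq_from_nth _ false); first by rewrite size_desc s1.
    move=> x; rewrite size_desc => xN; rewrite nth_desc //.
    have [c1|c1] := ltnP x k.
    * have [c2|c2] := ltnP x.+1 k.
      - rewrite !Phi_out ?inblk_inord /inblk; try lia.
        rewrite h12 -?dp' ?nth_desc //; lia.
      - have ex : x.+1 = k by lia.
        rewrite (bl_inord k r m x.+1) ?(Phi_out _ _ _ _ _ (inord x)) ?inblk_inord /inblk; try lia.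
        rewrite Phi_bl h12; try lia.
        have hw : nth false W2 x = false.
          have -> : x = k.-1 by lia.
          by apply: hl; lia.
        rewrite hw; move: hw.
        rewrite -dp' nth_desc // (bl_inord k r m x.+1); try lia.
        have -> : x.+1 - k = 0 by lia.
        move=> /negbT; rewrite -leqNgt => le1.
        apply/negbTE; rewrite -leqNgt.
        apply: (leq_trans le1).
        rewrite leqNgt -sig_ltE -/s permKV -leqNgt.
        have -> : (inord 0 : 'I_r.+1) = ord0 by apply: val_inj; rewrite /= inordK.
        exact: wf.
    * have [c2|c2] := ltnP x (k + r).
      - rewrite (bl_inord k r m x.+1) ?(bl_inord k r m x); try lia.
        rewrite -sig_ltE sig_Phi.
        have -> : x = k + (x - k) by lia.
        rewrite h1; last lia.
        rewrite -dS nth_desc; last lia.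
        have -> : k + (x - k) - k = x - k by lia.
        by have -> : (k + (x - k)).+1 - k = (x - k).+1 by lia.
      - have [c3|c3] := ltnP (k + r) x.
        + rewrite !Phi_out ?inblk_inord /inblk; try lia.
          rewrite h12 -?dp' ?nth_desc //; lia.
        + have ex : x = k + r by lia.
          rewrite (bl_inord k r m x) ?(Phi_out _ _ _ _ _ (inord x.+1)) ?inblk_inord /inblk; try lia.
          rewrite Phi_bl h12; try lia.
          have hw : nth false W2 x = false.
            by rewrite ex; apply: hr; lia.
          rewrite hw; move: hw.
          rewrite -dp' nth_desc // (bl_inord k r m x); try lia.
          move=> /negbT; rewrite -leqNgt => le1.
          apply/negbTE; rewrite -leqNgt.
          apply: (leq_trans _ le1).
          rewrite leqNgt -sig_ltE -/s permKV -leqNgt.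
          have -> : (inord (x - k) : 'I_r.+1) = ord_max by apply: val_inj; rewrite /= inordK; lia.
          exact: wl.
  + apply/subsetP => z; rewrite inE => /existsP[i /existsP[j /and3P[ij pji /eqP ->]]].
    rewrite inE.
    case hi: (inblk k r i); case hj: (inblk k r j).
    * move: ij pji; rewrite -(unblK _ _ _ _ hi) -(unblK _ _ _ _ hj).
      set a := unbl k r m i; set b := unbl k r m j.
      rewrite !blE ltn_add2l => ab; rewrite -sig_ltE -/s => sba.
      have : (s a, s b) \in inv_set s.
        rewrite inE; apply/existsP; exists a; apply/existsP; exists b.
        by rewrite ab sba eqxx.
      move/(subsetP wle); rewrite inE => /existsP[a' /existsP[b' /and3P[ab' _ /eqP[ea eb]]]].
      apply/existsP; exists (bl k r m a'); apply/existsP; exists (bl k r m b').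
      rewrite !Phi_bl -/s -ea -eb !permK !blE ltn_add2l ab' /=.
      by rewrite -sig_ltE -/s sba eqxx.
    * apply/existsP; exists (bl k r m ((phi s)^-1%g (s (unbl k r m i)))).
      apply/existsP; exists j.
      rewrite Phi_pre (unblK _ _ _ _ hi) Phi_out ?hj // pji eqxx andbT /= blE.
      have w := ltn_ord ((phi s)^-1%g (s (unbl k r m i))).
      move: hi hj ij w; rewrite /inblk => /andP[hi1 hi2] /negbT.
      rewrite negb_and -!ltnNge => /orP[] ? ? ?; lia.
    * apply/existsP; exists i.
      apply/existsP; exists (bl k r m ((phi s)^-1%g (s (unbl k r m j)))).
      rewrite Phi_pre (unblK _ _ _ _ hj) Phi_out ?hi // pji eqxx andbT /= blE.
      move: hi hj ij; rewrite /inblk => /negbT.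
      rewrite negb_and -!ltnNge => /orP[] ? /andP[? ?] ?; lia.
    * apply/existsP; exists i; apply/existsP; exists j.
      by rewrite !Phi_out ?hi ?hj // ij pji eqxx.
Qed.

Lemma core2 r (P Q wS wT : seq bool) : dom_at r wS wT -> size wS = r -> size wT = r ->
  (0 < size P -> nth false P (size P).-1 = false) -> (0 < size Q -> nth false Q 0 = false) ->
  dominates (P ++ wS ++ Q) (P ++ wT ++ Q).
Proof.
move=> D sS sT hP hQ; split; first by rewrite !size_cat sS sT.
have -> : size (P ++ wS ++ Q) = size P + r + size Q by rewrite !size_cat sS addnA.
apply: (core (size P) r (size Q) wS wT) => //.
- by rewrite !size_cat sS addnA.
- by rewrite !size_cat sT addnA.
- by move=> i ir; rewrite nth_cat ltnNge leq_addr /= addKn nth_cat sS ir.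
- by move=> i ir; rewrite nth_cat ltnNge leq_addr /= addKn nth_cat sT ir.
- move=> i iN /orP[h|h]; first by rewrite !nth_cat h.
  rewrite !nth_cat sS sT.
  have -> : (i < size P) = false by apply/negbTE; rewrite -leqNgt; lia.
  by have -> : (i - size P < r) = false by apply/negbTE; rewrite -leqNgt; lia.
- move=> h; rewrite nth_cat ifT; first exact: hP.
  by rewrite prednK.
- move=> h; rewrite nth_cat ltnNge leq_addr /= addKn nth_cat sT ltnn subnn.
  apply: hQ; lia.
Qed.

Theorem proposition5p3 (r : nat) (S T : {set 'I_r}) (u v : seq bool) :
  dom_at r (mword S) (mword T) ->
  [/\ dominates (mword S ++ letter_a :: v) (mword T ++ letter_a :: v),
      dominates (u ++ letter_a :: mword S) (u ++ letter_a :: mword T)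
    & dominates (u ++ letter_a :: mword S ++ letter_a :: v)
                (u ++ letter_a :: mword T ++ letter_a :: v)].
Proof.
move=> D.
have sS : size (mword S) = r by rewrite size_map size_enum_ord.
have sT : size (mword T) = r by rewrite size_map size_enum_ord.
have hP : 0 < size (u ++ [:: letter_a]) ->
    nth false (u ++ [:: letter_a]) (size (u ++ [:: letter_a])).-1 = false.
  by move=> _; rewrite size_cat addn1 /= nth_cat ltnn subnn.
split.
- exact: (core2 r [::] (letter_a :: v) _ _ D sS sT).
- have E : forall w : seq bool, u ++ letter_a :: w = (u ++ [:: letter_a]) ++ w ++ [::].
    by move=> w; rewrite cats0 -catA.
  rewrite (E (mword S)) (E (mword T)); exact: (core2 r _ [::] _ _ D sS sT).
- have E : forall w : seq bool, u ++ letter_a :: w ++ letter_a :: v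
        = (u ++ [:: letter_a]) ++ w ++ letter_a :: v.
    by move=> w; rewrite -catA.
  rewrite (E (mword S)) (E (mword T)); exact: (core2 r _ (letter_a :: v) _ _ D sS sT).
Qed.
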